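(* Let $L$ be a shift having left special factors of arbitrarily large length, and let $\mu$ be a $\sigma$-invariant, nonatomic, regular Borel probability measure on $L$, positive on nonempty cylinders, with $\mu(SP_L)=0$. Let $V=\{v^{(k)}\}_{k>0}$ be as defined below. Then $V$ is infinite and $L=\bigsqcup_{k>0}Cyl_L(v^{(k)})\sqcup W_{SP_L}$, a disjoint union, where $W_{SP_L}=\sigma^{-1}(SP_L)$. Moreover: (i) for every $k$ and all $w<w'$ in $Cyl_L(v^{(k)})$, $\sigma([w,w'])=[\sigma(w),\sigma(w')]$; (ii) $W_{SP_L}$ is nonempty, has $\mu$-measure $0$, and consists exactly of the accumulation points in $L$ of the set of endpoints (smallest and greatest words) of the cylinders $Cyl_L(v^{(k)})$.
   Context: $A$ is a finite totally ordered alphabet. $A^{\mathbb N}$ has the lexicographic order and the Cantor topology, and $\sigma$ deletes the first letter. A shift is a closed $L\subseteq A^{\mathbb N}$ with $\sigma(L)\subseteq L$. $Fact_L$ is the set of finite factors of words of $L$, and $Cyl_L(v)=\{w\in L: v \text{ prefix of } w\}$. For $w\le w'$ in $L$, $[w,w']=\{w''\in L:w\le w''\le w'\}$. A factor $u\in Fact_L$ is left special if $bu\in Fact_L$ for at least two distinct $b\in A$. $SP_L$ is the set of infinite words all of whose finite prefixes are left special factors of $L$. Let $V=\{v^{(k)}\}_{k>0}$ be an enumeration of the set of words $au\in Fact_L$ with $a\in A$ and $u$ a nonempty word such that $u$ is not left special while every nonempty proper prefix of $u$ is left special. These are the cylinders produced by iteratively refining $CYL_L(n)$, stopping at cylinders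 $Cyl_L(au)$ with $u$ not left special. *)

(* Defs.v *)
From Stdlib Require Import Reals.
From mathcomp Require Import all_boot all_order.
Set Implicit Arguments.
Unset Strict Implicit.
Unset Printing Implicit Defensive.

Definition word (A : Type) := nat -> A.

Definition shift (A : Type) (w : word A) : word A := fun n => w n.+1.

Fixpoint is_prefix (A : Type) (v : seq A) (w : word A) : Prop :=
  match v with
  | [::] => True
  | a :: v' => w 0 = a /\ is_prefix v' (shift w)
  end.

Definition is_factor (A : Type) (u : seq A) (w : word A) : Prop :=
  exists i, is_prefix u (fun n => w (i + n)).

Definition agree (A : Type) (n : nat) (w w' : word A) : Prop :=
  forall i, (i < n)%N -> w i = w' i.

Definition is_open (A : Type) (U : word A -> Prop) : Prop :=
  forall w, U w -> exists n, forall w', agree n w w' -> U w'.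
Definition is_closed (A : Type) (F : word A -> Prop) : Prop :=
  is_open (fun w => ~ F w).

Definition is_shift (A : Type) (L : word A -> Prop) : Prop :=
  is_closed L /\ forall w, L w -> L (shift w).

Definition Fact (A : Type) (L : word A -> Prop) (u : seq A) : Prop :=
  exists w, L w /\ is_factor u w.

Definition left_special (A : Type) (L : word A -> Prop) (u : seq A) : Prop :=
  exists b b' : A, b <> b' /\ Fact L (b :: u) /\ Fact L (b' :: u).

Definition SP_set (A : Type) (L : word A -> Prop) (w : word A) : Prop :=
  forall n, left_special L (mkseq w n).

Definition Cyl (A : Type) (L : word A -> Prop) (v : seq A) (w : word A) : Prop :=
  L w /\ is_prefix v w.

Definition In_V (A : Type) (L : word A -> Prop) (v : seq A) : Prop :=
  exists (a : A) (u : seq A), v = a :: u /\ Fact L v /\ u <> [::] /\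
    ~ left_special L u /\
    (forall n, (0 < n)%N -> (n < size u)%N -> left_special L (take n u)).

Definition W_SP (A : Type) (L : word A -> Prop) (w : word A) : Prop :=
  L w /\ SP_set L (shift w).

Definition lex_lt (d : Order.disp_t) (A : orderType d) (w w' : word A) : Prop :=
  exists n, agree n w w' /\ (w n < w' n)%O.
Definition lex_le (d : Order.disp_t) (A : orderType d) (w w' : word A) : Prop :=
  (forall i, w i = w' i) \/ lex_lt w w'.

Definition interval (d : Order.disp_t) (A : orderType d) (L : word A -> Prop)
  (w w' x : word A) : Prop :=
  L x /\ lex_le w x /\ lex_le x w'.

Definition is_endpoint (d : Order.disp_t) (A : orderType d) (L : word A -> Prop)
  (e : word A) : Prop :=
  exists v, In_V L v /\ Cyl L v e /\
    ((forall x, Cyl L v x -> lex_le e x) \/ (forall x, Cyl L v x -> lex_le x e)).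

Definition acc_point (A : Type) (L : word A -> Prop) (E : word A -> Prop)
  (x : word A) : Prop :=
  L x /\ forall n, exists e, E e /\ ~ (forall i, e i = x i) /\ agree n x e.

Inductive borel (A : Type) : (word A -> Prop) -> Prop :=
| borel_open U : is_open U -> borel U
| borel_compl B : borel B -> borel (fun w => ~ B w)
| borel_union (F : nat -> word A -> Prop) :
    (forall n, borel (F n)) -> borel (fun w => exists n, F n w).

Definition meas_L (A : Type) (L : word A -> Prop) (B : word A -> Prop) : Prop :=
  exists B', borel B' /\ forall w, B w <-> (L w /\ B' w).

(* mu is a Borel probability measure on L (its values outside Borel sets
   of L are irrelevant) *)
Definition prob_measure (A : Type) (L : word A -> Prop)
  (mu : (word A -> Prop) -> R) : Prop :=
  (forall B, meas_L L B -> Rle R0 (mu B)) /\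
  mu L = R1 /\
  (forall F : nat -> word A -> Prop,
     (forall n, meas_L L (F n)) ->
     (forall m n, m <> n -> forall w, ~ (F m w /\ F n w)) ->
     infinite_sum (fun n => mu (F n)) (mu (fun w => exists n, F n w))).

Definition sigma_invariant (A : Type) (L : word A -> Prop)
  (mu : (word A -> Prop) -> R) : Prop :=
  forall B, meas_L L B -> mu (fun w => L w /\ B (shift w)) = mu B.

Definition nonatomic (A : Type) (L : word A -> Prop)
  (mu : (word A -> Prop) -> R) : Prop :=
  ~ exists B, meas_L L B /\ Rlt R0 (mu B) /\
      forall C, meas_L L C -> (forall w, C w -> B w) -> mu C = R0 \/ mu C = mu B.

(* regular: outer regular by (relatively) open sets, inner regular by
   closed (= compact, A^N being compact) subsets *)
Definition regular (A : Type) (L : word A -> Prop)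
  (mu : (word A -> Prop) -> R) : Prop :=
  forall B, meas_L L B -> forall eps, Rlt R0 eps ->
    (exists O, is_open O /\ (forall w, B w -> O w) /\
        Rle (mu (fun w => L w /\ O w)) (Rplus (mu B) eps)) /\
    (exists K, is_closed K /\ (forall w, K w -> B w) /\
        Rle (Rminus (mu B) eps) (mu K)).

Definition positive_on_cylinders (A : Type) (L : word A -> Prop)
  (mu : (word A -> Prop) -> R) : Prop :=
  forall v : seq A, (exists w, Cyl L v w) -> Rlt R0 (mu (Cyl L v)).

(* Main.v *)
Require Import Defs.
From Stdlib Require Import Reals Lra.
From Stdlib Require Import Classical ClassicalEpsilon FunctionalExtensionality PropExtensionality.
From mathcomp Require Import all_boot all_order zify.
Import Order.TTheory.
Set Implicit Arguments.
Unset Strict Implicit.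

Section Basics.
Variable T : Type.

Lemma mkseq_cons (w : word T) n : mkseq w n.+1 = w 0 :: mkseq (shift w) n.
Proof.
rewrite /mkseq /=; congr (_ :: _).
have -> : iota 1 n = map (addn 1) (iota 0 n) by rewrite -iotaDl.
by rewrite -map_comp; apply: eq_map => i /=; rewrite /shift /= add1n.
Qed.

Lemma prefixE (p : seq T) w : is_prefix p w <-> mkseq w (size p) = p.
Proof.
elim: p w => [|a p IH] w /=; first by split.
rewrite mkseq_cons; split.
  by case=> -> /IH ->.
by case=> -> /IH.
Qed.

Lemma agreeE n (w w' : word T) : agree n w w' <-> mkseq w n = mkseq w' n.
Proof.
split.
  by move=> H; apply/eq_in_map => i; rewrite mem_iota add0n => /andP [_ /H].
move=> E i Hi.
have [x0] : exists x : T, True by exists (w 0).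
move=> _; have := congr1 (fun s => nth x0 s i) E; by rewrite /= !nth_mkseq.
Qed.

Lemma take_mkseq (w : word T) k n : (k <= n)%N -> take k (mkseq w n) = mkseq w k.
Proof.
move=> kn; apply/(@eq_from_nth _ (w 0)).
  by rewrite size_take !size_mkseq; case: (ltnP k n) => // H; lia.
move=> i; rewrite size_take size_mkseq => Hi.
have ik : (i < k)%N by move: Hi; case: (ltnP k n) => H; lia.
rewrite nth_take // !nth_mkseq //; lia.
Qed.

Lemma prefix_take (p : seq T) k w : is_prefix p w -> is_prefix (take k p) w.
Proof.
elim: p k w => [|a p IH] [|k] w //=.
by case=> -> H; split=> //; apply: IH.
Qed.

Lemma agree_le n m (w w' : word T) : (m <= n)%N -> agree n w w' -> agree m w w'.
Proof. move=> mn H i im; apply: H; lia. Qed.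

Lemma agree_sym n (w w' : word T) : agree n w w' -> agree n w' w.
Proof. by move=> H i /H ->. Qed.

Lemma agree_trans n (w w' w'' : word T) : agree n w w' -> agree n w' w'' -> agree n w w''.
Proof. by move=> H H' i Hi; rewrite H // H'. Qed.

Lemma prefix_agree (p : seq T) w w' : is_prefix p w -> agree (size p) w w' -> is_prefix p w'.
Proof. by move=> /prefixE H /agreeE E; apply/prefixE; rewrite -E. Qed.

Lemma ptw_eq (w w' : word T) : (forall i, w i = w' i) -> w = w'.
Proof. by move=> H; apply: functional_extensionality. Qed.

Lemma first_diff (x y : word T) : ~ (forall i, x i = y i) ->
  exists k, agree k x y /\ x k <> y k.
Proof.
move=> H; apply: NNPP => H'; apply: H.
suff: forall n, agree n x y by move=> G i; apply: (G i.+1); lia.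
elim=> [|n IH]; first by move=> i; lia.
move=> i Hi; case: (ltngtP i n) => [/IH //|| ->]; first lia.
by apply: NNPP => Hn; apply: H'; exists n.
Qed.

Lemma min_nat (P : nat -> Prop) : (exists n, P n) -> exists n, P n /\ forall m, (m < n)%N -> ~ P m.
Proof.
move=> [n Pn]; apply: NNPP => H.
suff: forall k m, (m <= k)%N -> ~ P m by move/(_ n n (leqnn n)).
elim=> [|k IH] m Hm Pm; apply: H; exists m; split => // m' Hm'.
  lia.
apply: IH; lia.
Qed.

End Basics.

Section Shift.
Variables (d : Order.disp_t) (A : finOrderType d) (L : word A -> Prop).
Hypothesis hL : is_shift L.

Lemma L_iter w i : L w -> L (fun n => w (i + n)).
Proof.
move=> Lw; elim: i => [|i IH].
  by have -> : (fun n => w (0 + n)) = w by apply: functional_extensionality.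
have -> : (fun n => w (i.+1 + n)) = shift (fun n => w (i + n)).
  by apply: functional_extensionality => n; rewrite /shift addSn addnS.
exact: hL.2.
Qed.

Lemma FactE u : Fact L u <-> exists w, L w /\ is_prefix u w.
Proof.
split.
  by case=> w [Lw [i Hi]]; exists (fun n => w (i + n)); split => //; apply: L_iter.
case=> w [Lw Hw]; exists w; split => //; exists 0.
by have -> : (fun n => w (0 + n)) = w by apply: functional_extensionality.
Qed.

Lemma closedL w : (forall n, exists w', L w' /\ agree n w w') -> L w.
Proof.
move=> H; apply: NNPP => nL.
case: (hL.1 w nL) => n Hn.
by case: (H n) => w' [Lw' Hw']; apply: (Hn w').
Qed.

Lemma Fact_take u k : Fact L u -> Fact L (take k u).
Proof. by move/FactE => [w [Lw Hw]]; apply/FactE; exists w; split => //; apply: prefix_take. Qed.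

Lemma Fact_tail b u : Fact L (b :: u) -> Fact L u.
Proof. by move/FactE => [w [Lw [_ Hw]]]; apply/FactE; exists (shift w); split => //; apply: hL.2. Qed.

Lemma LS_take u k : left_special L u -> left_special L (take k u).
Proof.
case=> b [b' [nb [F1 F2]]]; exists b, b'; split => //.
by split; [move: (Fact_take k.+1 F1) | move: (Fact_take k.+1 F2)].
Qed.

Lemma LS_mkseq (w : word A) k n : (k <= n)%N -> left_special L (mkseq w n) -> left_special L (mkseq w k).
Proof. by move=> kn /(LS_take k); rewrite take_mkseq. Qed.

Lemma In_V_cyl v w : In_V L v -> Cyl L v w ->
  exists a u, v = a :: u /\ w 0 = a /\ mkseq (shift w) (size u) = u /\ u <> [::] /\
    ~ left_special L u /\ (forall n, (0 < n)%N -> (n < size u)%N -> left_special L (take n u)).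
Proof.
case=> a [u [-> [F [nu [nLS H]]]]] [Lw [w0 Hp]].
by exists a, u; do !split => //; apply/prefixE.
Qed.

Lemma decomp w : left_special L [::] -> L w -> ~ SP_set L (shift w) ->
  exists v, In_V L v /\ Cyl L v w.
Proof.
move=> LS0 Lw nSP.
have [n [Hn Hmin]] : exists n, ~ left_special L (mkseq (shift w) n) /\
    forall m, (m < n)%N -> ~ ~ left_special L (mkseq (shift w) m).
  by apply: min_nat; apply: NNPP => H; apply: nSP => n; apply: NNPP => H'; apply: H; exists n.
have n0 : (0 < n)%N by case: n Hn {Hmin} => // /=.
exists (w 0 :: mkseq (shift w) n).
have Cw : Cyl L (w 0 :: mkseq (shift w) n) w.
  by split => //; split => //; apply/prefixE; rewrite size_mkseq.
split => //; exists (w 0), (mkseq (shift w) n); do !split => //.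
- by apply/FactE; exists w; case: Cw.
- by case: n n0 {Hn Hmin Cw}.
- move=> k k0; rewrite size_mkseq => kn; rewrite take_mkseq; last lia.
  by apply: NNPP; apply: Hmin.
Qed.

Lemma uniq_V v v' w : In_V L v -> In_V L v' -> Cyl L v w -> Cyl L v' w -> v = v'.
Proof.
move=> V1 V2 C1 C2.
case: (In_V_cyl V1 C1) => a [u [-> [<- [E [nu [nLS H]]]]]].
case: (In_V_cyl V2 C2) => a' [u' [-> [<- [E' [nu' [nLS' H']]]]]].
congr (_ :: _).
have s0 : (0 < size u)%N by case: u nu {E nLS H}.
have s0' : (0 < size u')%N by case: u' nu' {E' nLS' H'}.
case: (ltngtP (size u) (size u')) => c.
- exfalso; apply: nLS; move: (H' _ s0 c); rewrite -E' take_mkseq; last lia.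
  by rewrite E.
- exfalso; apply: nLS'; move: (H _ s0' c); rewrite -E take_mkseq; last lia.
  by rewrite E'.
- by rewrite -E -E' c.
Qed.

Lemma V_notSP v w : In_V L v -> Cyl L v w -> ~ SP_set L (shift w).
Proof.
move=> V1 C1 SP; case: (In_V_cyl V1 C1) => a [u [_ [_ [E [_ [nLS _]]]]]].
by apply: nLS; rewrite -E; apply: SP.
Qed.

Lemma KL v w m : In_V L v -> Cyl L v w ->
  (forall k, (k <= m)%N -> left_special L (mkseq (shift w) k)) -> (m.+1 < size v)%N.
Proof.
move=> V1 C1 H; case: (In_V_cyl V1 C1) => a [u [-> [_ [E [_ [nLS _]]]]]].
rewrite /=; case: (ltnP m (size u)) => c //.
by exfalso; apply: nLS; rewrite -E; apply: H.
Qed.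

End Shift.

Section Order.
Variables (d : Order.disp_t) (A : finOrderType d).

Lemma lex_le_agree (a y : word A) i : lex_le a y -> agree i a y -> (a i <= y i)%O.
Proof.
case=> [H | [n [Hn lt]]] Hi; first by rewrite H.
case: (ltngtP n i) => c.
- by move: lt; rewrite (Hi n c) ltxx.
- by rewrite (Hn i c).
- by rewrite c in lt; apply: ltW.
Qed.

Lemma lex_antisym (a b : word A) : lex_le a b -> lex_le b a -> forall i, a i = b i.
Proof.
case=> [H _ // | [n1 [H1 lt1]]]; case=> [H i | [n2 [H2 lt2]]]; first by rewrite H.
exfalso; case: (ltngtP n1 n2) => c.
- by move: lt1; rewrite (H2 n1 c) ltxx.
- by move: lt2; rewrite (H1 n2 c) ltxx.
- by rewrite c in lt1; move: (lt_trans lt1 lt2); rewrite ltxx.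
Qed.

Lemma interval_agree n (a b y : word A) : agree n a b -> lex_le a y -> lex_le y b -> agree n a y.
Proof.
elim: n => [|n IH] Hab H1 H2; first by move=> i; lia.
have Hn : agree n a y by apply: IH => //; apply: agree_le Hab; lia.
move=> i Hi; case: (ltngtP i n) => c; [by apply: Hn | lia |].
rewrite c; apply: le_anti; rewrite (lex_le_agree H1 Hn) /=.
rewrite (Hab n) //; apply: (lex_le_agree H2).
apply: agree_trans (agree_sym Hn) (agree_le _ Hab); lia.
Qed.

Lemma interval_prefix (p : seq A) a b y : is_prefix p a -> is_prefix p b ->
  lex_le a y -> lex_le y b -> is_prefix p y.
Proof.
move=> Pa Pb H1 H2; apply: (prefix_agree Pa); apply: (interval_agree _ H1 H2).
by apply/agreeE; move/prefixE: Pa => ->; move/prefixE: Pb => ->.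
Qed.

Lemma lex_shift (w x : word A) : w 0 = x 0 -> (lex_le w x <-> lex_le (shift w) (shift x)).
Proof.
move=> e; split.
- case=> [H | [[|n] [Hn lt]]]; first by left => i; apply: H.
  + by move: lt; rewrite e ltxx.
  + by right; exists n; split => // i Hi; apply: Hn.
- case=> [H | [n [Hn lt]]].
  + by left => -[|i] //; apply: H.
  + by right; exists n.+1; split => // -[|i] Hi //; apply: Hn.
Qed.

Lemma fin_bound (P : A -> nat -> Prop) : (forall a, exists N, forall m, (N <= m)%N -> P a m) ->
  exists N, forall a m, (N <= m)%N -> P a m.
Proof.
move=> H.
suff [N HN] : exists N, forall a, a \in enum A -> forall m, (N <= m)%N -> P a m.
  by exists N => a m; apply: HN; rewrite mem_enum.
elim: (enum A) => [|x s [N HN]]; first by exists 0.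
case: (H x) => Nx HNx; exists (N + Nx) => a; rewrite in_cons => /orP [/eqP -> | as_] m Hm.
  by apply: HNx; lia.
by apply: HN => //; lia.
Qed.

Lemma min_letter (P : A -> Prop) : (exists a, P a) -> exists m, P m /\ forall b, P b -> (m <= b)%O.
Proof.
move=> [a0 Pa0].
suff [m [Pm Hm]] : exists m, P m /\ forall b, b \in enum A -> P b -> (m <= b)%O.
  by exists m; split => // b; apply: Hm; rewrite mem_enum.
have : exists a, a \in enum A /\ P a by exists a0; rewrite mem_enum.
elim: (enum A) => [[a []] //|x s IH] [a [ain Pa]].
case: (classic (exists a, a \in s /\ P a)) => [/IH [m [Pm Hm]] | nex].
  case: (classic (P x /\ (x < m)%O)) => [[Px lt] | nc].
  - exists x; split => // b; rewrite in_cons => /orP [/eqP -> // | bs Pb].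
    by apply: ltW (lt_le_trans lt (Hm b bs Pb)).
  - exists m; split => // b; rewrite in_cons => /orP [/eqP -> Pb | bs Pb]; last by apply: Hm.
    by case: (leP m x) => // lt; exfalso; apply: nc.
- have Px : P x.
    by move: ain; rewrite in_cons => /orP [/eqP <- // | ais]; exfalso; apply: nex; exists a.
  exists x; split => // b; rewrite in_cons => /orP [/eqP -> // | bs Pb].
  by exfalso; apply: nex; exists b.
Qed.

Lemma path_lemma (good : seq A -> Prop) (Q : seq A -> A -> Prop) (a0 : A) :
  good [::] -> (forall u, good u -> exists a, Q u a /\ good (rcons u a)) ->
  exists x : word A, forall n, good (mkseq x n) /\ Q (mkseq x n) (x n).
Proof.
move=> g0 H.
pose F u := match excluded_middle_informative (good u) with
            | left h => proj1_sig (constructive_indefinite_description _ (H u h))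
            | right _ => a0 end.
have HF : forall u, good u -> Q u (F u) /\ good (rcons u (F u)).
  move=> u gu; rewrite /F; case: excluded_middle_informative => // h.
  by case: constructive_indefinite_description.
pose g := fix g n := if n is k.+1 then rcons (g k) (F (g k)) else [::].
have gg : forall n, good (g n) by elim=> [//|n IH] /=; case: (HF _ IH).
exists (fun n => F (g n)).
have E : forall n, mkseq (fun n => F (g n)) n = g n.
  by elim=> [//|n IH]; rewrite mkseqS IH.
by move=> n; rewrite E; split => //; case: (HF _ (gg n)).
Qed.

End Order.

Section Shift2.
Variables (d : Order.disp_t) (A : finOrderType d) (L : word A -> Prop).
Hypothesis hL : is_shift L.

Lemma min_exists v : Fact L v -> exists e, Cyl L v e /\ forall y, Cyl L v y -> lex_le e y.
Proof.
move=> /(FactE hL) [w0 [Lw0 Pw0]].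
pose good u := exists c, Cyl L v c /\ is_prefix u c.
have step : forall u, good u -> exists a, (forall b, good (rcons u b) -> (a <= b)%O) /\ good (rcons u a).
  move=> u [c [Cc Pc]].
  have : exists a, good (rcons u a).
    exists (c (size u)), c; split => //; apply/prefixE.
    by rewrite size_rcons mkseqS; move/prefixE: Pc => ->.
  by case/min_letter => a [ga Ha]; exists a.
have [m Hm] := path_lemma (w0 0) (ex_intro _ w0 (conj (conj Lw0 Pw0) I)) step.
have gm : forall n, exists c, Cyl L v c /\ mkseq c n = mkseq m n.
  move=> n; case: (Hm n) => [[c [Cc Pc]] _]; exists c; split => //.
  by move/prefixE: Pc; rewrite size_mkseq.
exists m; split.
  split.
    apply: (closedL hL) => n; case: (gm n) => c [[Lc _] E]; exists c; split => //.
    by apply/agreeE.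
  case: (gm (size v)) => c [[_ Pc] E]; apply/prefixE; rewrite -E; exact/prefixE.
move=> y Cy; case: (classic (forall i, m i = y i)) => [H | /first_diff [k [Hk ne]]].
  by left.
right; exists k; split => //.
case: (Hm k) => _ Q; rewrite lt_neqAle; apply/andP; split; first by apply/eqP.
apply: Q; exists y; split => //; apply/prefixE.
by rewrite size_rcons size_mkseq mkseqS; move/agreeE: Hk => ->.
Qed.

Lemma exists_W : (forall n, exists u, left_special L u /\ (n <= size u)%N) ->
  exists w, W_SP L w.
Proof.
move=> hLS.
pose good u := forall n, exists t, left_special L (u ++ t) /\ (n <= size (u ++ t))%N.
have g0 : good [::] by move=> n; case: (hLS n) => u Hu; exists u.
have goodLS : forall u, good u -> left_special L u.
  move=> u gu; case: (gu 0) => t [H _]; move: (LS_take hL (size u) H).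
  by rewrite take_size_cat.
have step : forall u, good u -> exists a, True /\ good (rcons u a).
  move=> u gu; apply: NNPP => H.
  have : forall a, exists N, forall m, (N <= m)%N -> ~ (exists t, left_special L (rcons u a ++ t) /\ (m <= size (rcons u a ++ t))%N).
    move=> a; apply: NNPP => H1; apply: H; exists a; split => // n.
    apply: NNPP => H2; apply: H1; exists n => m nm [t [Ht Hs]]; apply: H2; exists t; split => //; lia.
  case/fin_bound => N HN.
  case: (gu (N + size u).+1) => t [Ht Hs].
  case: t Ht Hs => [|a t] Ht Hs; first by rewrite cats0 in Hs; lia.
  apply: (HN a (size (rcons u a ++ t))) => //; last by exists t; split => //; rewrite cat_rcons.
  rewrite size_cat size_rcons; rewrite size_cat /= in Hs; lia.
have [a0 _] : exists a : A, True.
  by case: (hLS 1) => -[|a u] [_ H] //; exists a.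
have [x Hx] := path_lemma a0 g0 step.
have SPx : forall n, left_special L (mkseq x n) by move=> n; apply: goodLS; case: (Hx n).
have [b Hb] : exists b, forall n, Fact L (b :: mkseq x n).
  apply: NNPP => H.
  have : forall b, exists N, forall m, (N <= m)%N -> ~ Fact L (b :: mkseq x m).
    move=> b; apply: NNPP => H1; apply: H; exists b => n; apply: NNPP => H2; apply: H1.
    exists n => m nm F; apply: H2; move: (Fact_take hL n.+1 F) => /=; rewrite take_mkseq //.
  case/fin_bound => N HN; case: (SPx N) => b1 [b2 [_ [F _]]].
  by apply: (HN b1 N).
exists (fun n => if n is k.+1 then x k else b); split.
  apply: (closedL hL) => n; case/(FactE hL): (Hb n) => w' [Lw' Pw']; exists w'; split => //.
  apply: (@agree_le _ n.+1); first lia.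
  apply/agreeE; move/prefixE: Pw'; rewrite /= size_mkseq => ->.
  by rewrite mkseq_cons.
exact: SPx.
Qed.

End Shift2.

Section Measure.
Variables (d : Order.disp_t) (A : finOrderType d) (L : word A -> Prop)
  (mu : (word A -> Prop) -> R).
Hypothesis hL : is_shift L.
Hypothesis hmu : prob_measure L mu.
Hypothesis hinv : sigma_invariant L mu.
Hypothesis hpos : positive_on_cylinders L mu.
Hypothesis hSP : mu (SP_set L) = R0.
Local Open Scope R_scope.

Lemma pred_ext (X Y : word A -> Prop) : (forall w, X w <-> Y w) -> X = Y.
Proof. by move=> H; apply: functional_extensionality => w; apply: propositional_extensionality. Qed.

Lemma borel_ext (X Y : word A -> Prop) : borel X -> (forall w, X w <-> Y w) -> borel Y.
Proof. by move=> B /pred_ext <-. Qed.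

Lemma closed_borel (F : word A -> Prop) : is_closed F -> borel F.
Proof.
move=> H; apply: (borel_ext (borel_compl (borel_open H))) => w.
by split; [apply: NNPP | tauto].
Qed.

Lemma mu_ext (B C : word A -> Prop) : (forall w, B w <-> C w) -> mu B = mu C.
Proof. by move/pred_ext ->. Qed.

Lemma meas_empty : meas_L L (fun _ => False).
Proof. by exists (fun _ => False); split; [apply: borel_open => w | tauto]. Qed.

Lemma mu_empty : mu (fun _ => False) = R0.
Proof.
have := hmu.2.2 (fun _ _ => False) (fun _ => meas_empty) (fun _ _ _ _ h => proj1 h).
rewrite (@mu_ext (fun w => exists n : nat, False) (fun _ => False)); last by move=> w; split => // -[].
set c := mu _ => Hs.
apply: NNPP => nc.
have ep : Rlt R0 (Rabs c / 2) by apply: Rdiv_lt_0_compat; [apply: Rabs_pos_lt | lra].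
case: (Hs _ ep) => N HN.
have H1 := HN N (le_n N); have H2 := HN N.+1 (le_S _ _ (le_n N)).
rewrite /R_dist /= in H1 H2.
move: H1 H2; set s := sum_f_R0 _ N => H1 H2.
have e : s + c - c = s by ring.
rewrite e in H2.
move/Rabs_def2: H1 => [H1a H1b]; move/Rabs_def2: H2 => [H2a H2b].
case: (Rle_dec 0 c) => hc.
- rewrite Rabs_right in H1a H1b H2a H2b; lra.
- rewrite Rabs_left in H1a H1b H2a H2b; lra.
Qed.


Lemma meas_cyl p : meas_L L (Cyl L p).
Proof.
exists (is_prefix p); split; last by [].
apply: borel_open => w Pw; exists (size p) => w' Hw'; exact: prefix_agree Pw Hw'.
Qed.

Lemma SP_closed : is_closed (SP_set L).
Proof.
move=> w nSP.
have [n Hn] : exists n, ~ left_special L (mkseq w n).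
  by apply: NNPP => H; apply: nSP => n; apply: NNPP => H'; apply: H; exists n.
exists n => w' /agreeE E SP'; apply: Hn; rewrite E; apply: SP'.
Qed.

Lemma W_closed : is_closed (W_SP L).
Proof.
move=> w nW; case: (classic (L w)) => Lw.
  have [n Hn] : exists n, ~ left_special L (mkseq (shift w) n).
    by apply: NNPP => H; apply: nW; split => // n; apply: NNPP => H'; apply: H; exists n.
  exists n.+1 => w' Ha [_ SP']; apply: Hn.
  have : mkseq w n.+1 = mkseq w' n.+1 by apply/agreeE.
  by rewrite !mkseq_cons => -[_ ->]; apply: SP'.
case: (hL.1 w Lw) => n Hn; exists n => w' /Hn H [? _]; exact: H.
Qed.

Lemma SP_sub w : SP_set L w -> L w.
Proof.
move=> SP; apply: (closedL hL) => n.
case: (SP n) => b [_ [_ [F _]]].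
case/(FactE hL): (Fact_tail hL F) => w' [Lw' Pw']; exists w'; split => //.
by apply/agreeE; move/prefixE: Pw'; rewrite size_mkseq => ->.
Qed.

Lemma meas_SP : meas_L L (SP_set L).
Proof.
exists (SP_set L); split; first exact: closed_borel SP_closed.
by move=> w; split => [H|[]//]; split => //; apply: SP_sub.
Qed.

Lemma meas_W : meas_L L (W_SP L).
Proof.
exists (W_SP L); split; first exact: closed_borel W_closed.
by move=> w; split => [H|[]//]; split => //; case: H.
Qed.

Lemma mu_W : mu (W_SP L) = R0.
Proof. by rewrite -hSP; apply: (hinv meas_SP). Qed.

Lemma mono (B C : word A -> Prop) : meas_L L B -> meas_L L C -> (forall w, B w -> C w) ->
  mu B <= mu C.
Proof.
move=> [B' [bB' HB]] [C' [bC' HC]] BC.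
pose F (n : nat) := match n with 0 => B | 1 => (fun w => C w /\ ~ B w) | _ => (fun _ => False) end.
have mF : forall n, meas_L L (F n).
  case=> [|[|n]] /=; [by exists B' | | exact: meas_empty].
  exists (fun w => C' w /\ ~ B' w); split.
    pose G (n : nat) := match n with 0 => (fun w => ~ C' w) | _ => B' end.
    apply: (borel_ext (borel_compl (borel_union (F := G) _))).
      by case=> [|n] /=; [apply: borel_compl | ].
    move=> w; split.
      move=> H; split; first by apply: NNPP => H'; apply: H; exists 0%N.
      by move=> H'; apply: H; exists 1%N.
    by case=> H1 H2 [[|n] /=].
  move=> w; rewrite HC HB; tauto.
have dF : forall m n, m <> n -> forall w, ~ (F m w /\ F n w).
  by case=> [|[|m]] [|[|n]] //= _ w; tauto.
have S1 := hmu.2.2 F mF dF.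
rewrite (@mu_ext (fun w => exists n, F n w) C) in S1; last first.
  move=> w; split; first by case=> -[|[|n]] /=; [apply: BC | case | case].
  by move=> Cw; case: (classic (B w)) => Bw; [exists 0%N | exists 1%N].
have S2 : infinite_sum (fun n => mu (F n)) (mu B + mu (F 1%N)).
  move=> eps ep; exists 1%nat => n Hn.
  suff -> : sum_f_R0 (fun n => mu (F n)) n = mu B + mu (F 1%N) by rewrite /R_dist Rminus_diag Rabs_R0.
  elim: n Hn => [|n IH] Hn; first lia.
  case: n IH Hn => [|n] IH Hn; first by [].
  by rewrite /= in IH *; rewrite IH; [rewrite mu_empty; ring | lia].
have := uniqueness_sum _ _ _ S1 S2.
have := hmu.1 _ (mF 1%nat); rewrite /=; lra.
Qed.

Lemma preimage p : Fact L p -> exists b, Fact L (b :: p).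
Proof.
move=> Fp; have Cp : exists w, Cyl L p w by move/(FactE hL): Fp.
have pos := hpos Cp; rewrite -(hinv (meas_cyl p)) in pos.
case: (classic (exists w, L w /\ Cyl L p (shift w))) => [[w [Lw [_ Pw]]] | nex].
  by exists (w 0%N); apply/(FactE hL); exists w.
rewrite (@mu_ext _ (fun _ => False)) ?mu_empty in pos; first lra.
by move=> w; split => // H; apply: nex; exists w.
Qed.

Lemma NZ p : (exists w, Cyl L p w) -> exists w, Cyl L p w /\ ~ W_SP L w.
Proof.
move=> Cp; apply: NNPP => H.
have := hpos Cp; have := @mono (Cyl L p) (W_SP L) (meas_cyl p) meas_W.
rewrite mu_W => M pos.
suff : mu (Cyl L p) <= R0 by lra.
apply: M => w Cw; apply: NNPP => nW; apply: H; exists w; split => //.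
Qed.

End Measure.

Lemma in_sumn (A : Type) (v : seq A) s : List.In v s -> (size v <= sumn (map size s))%N.
Proof. elim: s => [//|x s IH] /= [-> | /IH]; lia. Qed.

Theorem mainTheorem11 (d : Order.disp_t) (A : finOrderType d)
  (L : word A -> Prop) (mu : (word A -> Prop) -> R)
  (hL : is_shift L)
  (hLS : forall n, exists u, left_special L u /\ (n <= size u)%N)
  (hmu : prob_measure L mu)
  (hinv : sigma_invariant L mu)
  (hna : nonatomic L mu)
  (hreg : regular L mu)
  (hpos : positive_on_cylinders L mu)
  (hSP : mu (SP_set L) = R0) :
  (* V is infinite *)
  (~ exists s : seq (seq A), forall v, In_V L v -> List.In v s) /\
  (* L = (disjoint union of Cyl_L(v), v in V) disjoint union W_{SP_L} *)
  (forall w, L w <-> ((exists v, In_V L v /\ Cyl L v w) \/ W_SP L w)) /\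
  (forall v v', In_V L v -> In_V L v' -> v <> v' ->
     forall w, ~ (Cyl L v w /\ Cyl L v' w)) /\
  (forall v w, In_V L v -> ~ (Cyl L v w /\ W_SP L w)) /\
  (* (i) *)
  (forall v w w', In_V L v -> Cyl L v w -> Cyl L v w' -> lex_lt w w' ->
     forall y, (exists x, interval L w w' x /\ forall n, shift x n = y n)
               <-> interval L (shift w) (shift w') y) /\
  (* (ii) *)
  (exists w, W_SP L w) /\
  mu (W_SP L) = R0 /\
  (forall x, W_SP L x <-> acc_point L (is_endpoint L) x).
Proof.
have LS0 : left_special L [::].
  by case: (hLS 0) => u [H _]; move: (LS_take hL 0 H); rewrite take0.
have NZ' := NZ hL hmu hinv hpos hSP.
have dec : forall w, L w -> ~ W_SP L w -> exists v, In_V L v /\ Cyl L v w.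
  by move=> w Lw nW; apply: (decomp hL LS0 Lw) => SP; apply: nW.
split.
  case=> s Hs.
  case: (hLS (sumn (map size s))) => u [LSu Hu].
  have [b [b' [_ [Fb _]]]] := LSu.
  have [w [[Lw Pw] nW]] := NZ' _ (proj1 (FactE hL _) Fb).
  have [v [Vv Cv]] := dec w Lw nW.
  case: Pw => _ /prefixE Pu.
  have H3 : forall k, (k <= size u)%N -> left_special L (mkseq (shift w) k).
    move=> k ks; rewrite -(take_mkseq _ ks) Pu.

 exact: (LS_take hL k LSu).
  have := KL Vv Cv H3; have := in_sumn (Hs _ Vv); lia.
split.
  move=> w; split.
    move=> Lw; case: (classic (W_SP L w)) => W; [by right | left; exact: dec].
  by case=> [[v [_ [Lw _]]] | [Lw _]].
split.
  by move=> v v' V1 V2 ne w [C1 C2]; apply: ne; apply: (uniq_V V1 V2 C1 C2).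
split.
  by move=> v w V1 [C1 [_ SP]]; apply: (V_notSP V1 C1).
split.
  move=> v w w' Vv Cw Cw' lt y.
  have [a [u [ev [w0 [Eu [nu [nLS Hpre]]]]]]] := In_V_cyl Vv Cw.
  have [_ Pw'] := Cw'; rewrite ev in Pw'; case: Pw' => w0' Pu'.
  have Pu : is_prefix u (shift w) by apply/prefixE.
  split.
    case=> x [[Lx [le1 le2]] Hx].
    have -> : y = shift x by apply: ptw_eq => n; rewrite Hx.
    have Px : is_prefix v x by apply: (interval_prefix Cw.2 Cw'.2 le1 le2).
    rewrite ev in Px; case: Px => x0 _.
    split; first exact: hL.2.
    have e1 : w 0 = x 0 by congruence.
    have e2 : x 0 = w' 0 by congruence.
    by split; [apply: (proj1 (lex_shift e1) le1) | apply: (proj1 (lex_shift e2) le2)].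
  case=> Ly [le1 le2].
  have Py : is_prefix u y by apply: (interval_prefix Pu Pu' le1 le2).
  pose x : word A := fun n => if n is k.+1 then y k else a.
  exists x; split => //; split; last first.
    have e1 : w 0 = x 0 by [].
    have e2 : x 0 = w' 0 by [].
    by split; [apply: (proj2 (lex_shift e1) le1) | apply: (proj2 (lex_shift e2) le2)].
  apply: (closedL hL) => n.
  pose p := mkseq y (n + size u).
  have Fp : Fact L p by apply/(FactE hL); exists y; split => //; apply/prefixE; rewrite size_mkseq.
  have [b Fb] := preimage hL hmu hinv hpos Fp.
  have ba : b = a.
    apply: NNPP => nba; apply: nLS; exists b, a; split => //; split.
      move: (Fact_take hL (size u).+1 Fb) => /=.
      by rewrite /p take_mkseq; [move/prefixE: Py => -> | lia].
    by rewrite -ev; case: Cw => Lw Pw; apply/(FactE hL); exists w.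
  rewrite ba in Fb; case/(FactE hL): Fb => x' [Lx' Px']; exists x'; split => //.
  apply: (@agree_le _ (n + size u).+1); first lia.
  apply/agreeE; move/prefixE: Px'; rewrite /= size_mkseq => ->.
  by rewrite mkseq_cons.
split; first exact: exists_W.
split; first exact: (mu_W hL hinv hSP).
move=> x; split.
  move=> Wx; have Lx := Wx.1; split => // n.
  have Cx : exists w, Cyl L (mkseq x n.+1) w by exists x; split => //; apply/prefixE; rewrite size_mkseq.
  have [w [[Lw Pw] nW]] := NZ' _ Cx.
  have [v [Vv Cv]] := dec w Lw nW.
  move/prefixE: Pw; rewrite size_mkseq => Exw.
  have Hk : forall k, (k <= n)%N -> left_special L (mkseq (shift w) k).
    move=> k kn; rewrite -(take_mkseq _ kn).
    move: Exw; rewrite !mkseq_cons => -[_ ->]; rewrite take_mkseq //; exact: Wx.2.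
  have sv := KL Vv Cv Hk.
  have Fv : Fact L v by apply/(FactE hL); exists w; case: Cv.
  have [e [Ce He]] := min_exists hL Fv.
  exists e; split; first by exists v; split => //; split => //; left.
  split.
    move=> Exe; have ee : e = x by apply: ptw_eq.
    by apply: (V_notSP Vv (w := x)); [rewrite -ee | case: Wx].
  apply: (@agree_trans _ _ _ w).
    by apply: (@agree_le _ n.+1) => //; apply/agreeE; rewrite Exw.
  apply: (@agree_le _ (size v)); first lia.
  by apply/agreeE; move/prefixE: Cv.2 => ->; move/prefixE: Ce.2 => ->.
case=> Lx Hacc; split => //; apply: NNPP => nSP.
have [v [Vv Cv]] := decomp hL LS0 Lx nSP.
pose mn e := forall y, Cyl L v y -> lex_le e y.
pose mx e := forall y, Cyl L v y -> lex_le y e.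
have get : forall n, (size v <= n)%N -> exists e, Cyl L v e /\ (mn e \/ mx e) /\
    ~ (forall i, e i = x i) /\ agree n x e.
  move=> n nv; case: (Hacc n) => e [[v' [Vv' [Ce' MM]]] [ne ag]].
  have Ce : Cyl L v e.
    split; first exact: Ce'.1.
    by apply: (prefix_agree Cv.2); apply: (@agree_le _ n).
  have ev := uniq_V Vv Vv' Ce Ce'; subst v'.
  by exists e; do !split => //; move=> H; apply: ne => i; rewrite H.
have same : forall e e', Cyl L v e -> Cyl L v e' -> (mn e /\ mn e' \/ mx e /\ mx e') ->
    forall i, e i = e' i.
  move=> e e' Ce Ce' [[m1 m2] | [m1 m2]].
    by apply: lex_antisym; [apply: m1 | apply: m2].
  by apply: lex_antisym; [apply: m2 | apply: m1].
have [e1 [C1 [T1 [N1 A1]]]] := get (size v) (leqnn _).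
have [k1 [_ D1]] := first_diff N1.
have [e2 [C2 [T2 [N2 A2]]]] := get (size v + k1.+1)%N (leq_addr _ _).
have [k2 [_ D2]] := first_diff N2.
have [e3 [C3 [T3 [N3 A3]]]] := get (size v + k1.+1 + k2.+1)%N ltac:(lia).
have e21 : e2 k1 = x k1 by rewrite A2 //; lia.
have e31 : e3 k1 = x k1 by rewrite A3 //; lia.
have e32 : e3 k2 = x k2 by rewrite A3 //; lia.
have s12 : ~ (mn e1 /\ mn e2 \/ mx e1 /\ mx e2).
  by move=> H; apply: D1; rewrite (same _ _ C1 C2 H k1).
have s13 : ~ (mn e1 /\ mn e3 \/ mx e1 /\ mx e3).
  by move=> H; apply: D1; rewrite (same _ _ C1 C3 H k1).
have s23 : ~ (mn e2 /\ mn e3 \/ mx e2 /\ mx e3).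
  by move=> H; apply: D2; rewrite (same _ _ C2 C3 H k2).
case: T1 => T1; case: T2 => T2; case: T3 => T3; tauto.
Qed.
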